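(* Let $N\ge1$, $\alpha\in\mathbb{C}$, and $u_0,\ldots,u_N\in\mathbb{C}$ with $u_j\notin\Lambda_\tau$ and $u_j+\alpha\tau\notin\Lambda_\tau$ for all $j$. Put $u=u_0+\cdots+u_N$. Then $$e^{2\pi i\alpha u}q^{\alpha^2(N+1)/2}\,\hat\mu_N(-\alpha\tau-u_0,\ldots,-\alpha\tau-u_N;\alpha+1;\tau)=\frac{(-1)^{N+1}\vartheta(u_0)\cdots\vartheta(u_N)}{\vartheta(u_0+\alpha\tau)\cdots\vartheta(u_N+\alpha\tau)}\,\hat\mu_N(u_0,\ldots,u_N;\alpha+1;\tau),$$ where $q^{\alpha^2(N+1)/2}:=e^{\pi i\alpha^2(N+1)\tau}$.
   Context: Fix $\tau$ with $\operatorname{Im}\tau>0$, $q=e^{2\pi i\tau}$, $\Lambda_\tau=\mathbb{Z}+\tau\mathbb{Z}$, $q^\beta:=e^{2\pi i\beta\tau}$. $(x;q)_\infty=\prod_{j\ge0}(1-xq^j)$. $\vartheta(u)=\vartheta(u;\tau)=-ie^{-\pi iu}q^{1/8}(q;q)_\infty(e^{2\pi iu};q)_\infty(qe^{-2\pi iu};q)_\infty$. For $n\in\mathbb{Z}^N$, $|n|=n_1+\cdots+n_N$. The multivariable generalized $\mu$-function is $$\hat\mu_N(u_0,\ldots,u_N;\beta;\tau)=e^{\pi i(\beta-1)u}\sum_{n\in\mathbb{Z}^N}\frac{e^{\pi iu_0}\,(e^{2\pi iu_0}q^{\beta+|n|};q)_\infty}{(e^{2\pi iu_0}q^{|n|};q)_\infty}\prod_{j=1}^N\frac{(-1)^{n_j}e^{-2\pi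 in_ju_j}q^{n_j(n_j+1)/2}}{\vartheta(u_j;\tau)},\quad u=u_0+\cdots+u_N,$$ defined for $u_0,\ldots,u_N\notin\Lambda_\tau$. *)

(* Defs.v *)
From Stdlib Require Import Reals ZArith List ClassicalEpsilon.
From Coquelicot Require Import Coquelicot.
Open Scope C_scope.

Definition cexp (z : C) : C :=
  (exp (Re z) * cos (Im z), exp (Re z) * sin (Im z))%R.

(* limit of a complex sequence (the unique limit if it exists, 0 otherwise) *)
Definition climit (s : nat -> C) : C :=
  match excluded_middle_informative
          (exists l : C, filterlim s eventually (locally l)) with
  | left H => proj1_sig (constructive_indefinite_description _ H)
  | right _ => 0
  end.

Fixpoint cprod (n : nat) (f : nat -> C) : C :=
  match n with
  | O => 1
  | S m => cprod m f * f m
  end.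

Fixpoint csum (n : nat) (f : nat -> C) : C :=
  match n with
  | O => 0
  | S m => csum m f + f m
  end.

Definition qpow (tau beta : C) : C := cexp (2 * PI * Ci * beta * tau).

(* (x; q)_oo with q = e^{2 pi i tau}, as the limit of partial products *)
Definition qpoch (x tau : C) : C :=
  climit (fun n => cprod n (fun j => 1 - x * qpow tau (INR j))).

Definition vartheta (u tau : C) : C :=
  - Ci * cexp (- PI * Ci * u) * qpow tau (/ 8)
  * qpoch (qpow tau 1) tau
  * qpoch (cexp (2 * PI * Ci * u)) tau
  * qpoch (qpow tau 1 * cexp (- (2 * PI * Ci * u))) tau.

Definition in_lattice (z tau : C) : Prop :=
  exists m n : Z, z = RtoC (IZR m) + RtoC (IZR n) * tau.

(* sum of f over the box [-K, K]^N; elements of Z^N are lists of length N *)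
Fixpoint zsum (a : Z) (len : nat) (g : Z -> C) : C :=
  match len with
  | O => 0
  | S m => zsum a m g + g (a + Z.of_nat m)%Z
  end.

Fixpoint boxsum (N : nat) (K : nat) (f : list Z -> C) : C :=
  match N with
  | O => f nil
  | S M => zsum (- Z.of_nat K)%Z (2 * K + 1)
                (fun k => boxsum M K (fun l => f (k :: l)))
  end.

Definition sumZN (N : nat) (f : list Z -> C) : C :=
  climit (fun K => boxsum N K f).

Definition zabs_sum (n : list Z) : Z := fold_right Z.add 0%Z n.

Definition sgnZ (k : Z) : C := if Z.even k then 1 else -1.

(* multivariable generalized mu-function mu_hat_N(u_0,...,u_N; beta; tau);
   the variables u_0, ..., u_N are u 0, ..., u N; the summation index
   n = (n_1,...,n_N) is a list of length N, n_j = nth (j-1) n 0. *)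
Definition mu_hat (N : nat) (u : nat -> C) (beta tau : C) : C :=
  let U := csum (S N) u in
  cexp (PI * Ci * (beta - 1) * U) *
  sumZN N (fun n =>
    let m := RtoC (IZR (zabs_sum n)) in
    cexp (PI * Ci * u 0%nat)
    * qpoch (cexp (2 * PI * Ci * u 0%nat) * qpow tau (beta + m)) tau
    / qpoch (cexp (2 * PI * Ci * u 0%nat) * qpow tau m) tau
    * cprod N (fun j =>
        let nj := nth j n 0%Z in
        sgnZ nj
        * cexp (- (2 * PI * Ci * RtoC (IZR nj) * u (S j)))
        * cexp (PI * Ci * tau * RtoC (IZR (nj * (nj + 1))))
        / vartheta (u (S j)) tau)).

(* Main.v *)
Require Import Defs.
From Stdlib Require Import Reals ZArith List.
From Stdlib Require Import Lra Lia ClassicalEpsilon Classical FunctionalExtensionality.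
From Coquelicot Require Import Coquelicot.
Open Scope C_scope.


Lemma cexp_add : forall a b, cexp (a + b) = cexp a * cexp b.
Proof.
  intros [a1 a2] [b1 b2]. unfold cexp, Cmult, Cplus; simpl.
  rewrite exp_plus, cos_plus, sin_plus. f_equal; ring.
Qed.

Lemma cexp_0 : cexp 0 = 1.
Proof. unfold cexp; simpl. rewrite exp_0, cos_0, sin_0. apply injective_projections; simpl; ring. Qed.

Lemma cexp_neq0 : forall z, cexp z <> 0.
Proof.
  intros [a b] H. unfold cexp in H; simpl in H. injection H as H1 H2.
  pose proof (exp_pos a). apply Rmult_integral in H1. apply Rmult_integral in H2.
  destruct H1 as [H1|H1]; [lra|]. destruct H2 as [H2|H2]; [lra|].
  apply (cos_sin_0 b); auto.
Qed.

Lemma cexp_opp : forall z, cexp (- z) * cexp z = 1.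
Proof. intros. rewrite <- cexp_add. replace (-z+z) with (RtoC 0) by ring. apply cexp_0. Qed.

Lemma cexp_ext : forall a b, a = b -> cexp a = cexp b.
Proof. intros; subst; auto. Qed.

Definition ee (w : C) : C := cexp (2 * PI * Ci * w).
Definition PP (tau w : C) : C := qpoch (ee w) tau.

Lemma ee_add : forall a b, ee (a + b) = ee a * ee b.
Proof. intros. unfold ee. rewrite <- cexp_add. f_equal. ring. Qed.

Lemma ee_neq0 : forall a, ee a <> 0.
Proof. intros; apply cexp_neq0. Qed.

Lemma ee_flip : forall w, 1 - ee w = - ee w * (1 - ee (- w)).
Proof.
  intros. assert (H: ee w * ee (-w) = 1).
  { rewrite <- ee_add. replace (w + - w) with (RtoC 0) by ring. unfold ee.
    replace (2*PI*Ci*0) with (RtoC 0) by ring. apply cexp_0. }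
  transitivity (1 - ee w + (ee w * ee (-w) - 1)). rewrite H; ring. ring.
Qed.

Lemma qpow_ee : forall tau b, qpow tau b = ee (b * tau).
Proof. intros. unfold qpow, ee. f_equal. ring. Qed.

Lemma ee_pair : forall a b : R, ee (a, b) = (exp (- (2*PI*b)) * cos (2*PI*a), exp (- (2*PI*b)) * sin (2*PI*a))%R.
Proof.
  intros. unfold ee, cexp.
  replace (2*PI*Ci*(a,b)) with ((-(2*PI*b))%R, (2*PI*a)%R)
    by (apply injective_projections; simpl; ring).
  reflexivity.
Qed.

Lemma ee_one : forall w, ee w = 1 -> exists k : Z, w = RtoC (IZR k).
Proof.
  intros [a b] H. rewrite ee_pair in H. injection H as H1 H2.
  pose proof (exp_pos (- (2*PI*b))) as He.
  assert (Hs : sin (2*PI*a) = 0%R).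
  { apply Rmult_integral in H2. destruct H2; lra. }
  assert (Hc2 : ((cos (2*PI*a))^2 = 1)%R).
  { pose proof (sin2_cos2 (2*PI*a)). unfold Rsqr in H. rewrite Hs in H. simpl. lra. }
  assert (Hc : cos (2*PI*a) = 1%R).
  { assert (0 < cos (2*PI*a))%R. { destruct (Rlt_or_le 0 (cos (2*PI*a))); auto. nra. }
    nra. }
  assert (Hb : b = 0%R).
  { rewrite Hc, Rmult_1_r in H1. rewrite <- exp_0 in H1. apply exp_inv in H1.
    pose proof PI_RGT_0. assert (PI*b = 0)%R by lra.
    apply Rmult_integral in H0. destruct H0; lra. }
  replace (2*PI*a)%R with (2*(PI*a))%R in Hc by ring.
  rewrite cos_2a_sin in Hc.
  assert (sin (PI*a) = 0%R) by nra.
  destruct (sin_eq_0_0 _ H) as [k Hk]. exists k.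
  pose proof PI_RGT_0.
  apply injective_projections; simpl; auto.
  apply (Rmult_eq_reg_l PI); [|lra]. rewrite Hk; ring.
Qed.

Definition hasLim (s : nat -> C) (l : C) := filterlim s eventually (locally l).

Lemma climit_lim : forall s l, hasLim s l -> climit s = l.
Proof.
  intros s l H. unfold climit.
  destruct (excluded_middle_informative _) as [E|E].
  - destruct (constructive_indefinite_description _ E) as [l' Hl']. simpl.
    exact (@filterlim_locally_unique _ _ C_NormedModule eventually _ s l' l Hl' H).
  - exfalso; apply E; exists l; auto.
Qed.

Lemma climit_nolim : forall s, (forall l, ~ hasLim s l) -> climit s = 0.
Proof.
  intros s H. unfold climit.
  destruct (excluded_middle_informative _) as [E|E]; auto.
  destruct E as [l Hl]. exfalso; eapply H; eauto.
Qed.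

Lemma hasLim_S : forall s l, hasLim s l <-> hasLim (fun n => s (S n)) l.
Proof.
  intros s l; unfold hasLim, filterlim, filter_le, filtermap; split; intros H P HP;
  destruct (H P HP) as [N HN].
  - exists N. intros n Hn. apply HN. lia.
  - exists (S N). intros n Hn. destruct n as [|n]; [lia|]. apply HN. lia.
Qed.

Lemma climit_S : forall s, climit (fun n => s (S n)) = climit s.
Proof.
  intros s. destruct (classic (exists l, hasLim s l)) as [[l Hl]|E].
  - rewrite (climit_lim s l Hl). apply climit_lim. apply (proj1 (hasLim_S s l)); auto.
  - rewrite (climit_nolim s), (climit_nolim (fun n => s (S n))); auto.
    + intros l0 Hl0; apply E; exists l0; apply (proj2 (hasLim_S s l0)); auto.
    + intros l0 Hl0; apply E; exists l0; auto.
Qed.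

Lemma hasLim_scal : forall c s l, hasLim s l -> hasLim (fun n => c * s n) (c * l).
Proof.
  intros c s l H. unfold hasLim.
  apply (filterlim_comp _ _ _ s (fun z : C => scal c z) eventually (locally l)); auto.
  apply (filterlim_scal_r (V:=C_NormedModule) c l).
Qed.

Lemma hasLim_ext : forall s t l, (forall n, s n = t n) -> hasLim s l -> hasLim t l.
Proof. intros s t l E H. unfold hasLim. eapply filterlim_ext; eauto. Qed.

Lemma climit_ext : forall s t, (forall n, s n = t n) -> climit s = climit t.
Proof.
  intros. f_equal. apply functional_extensionality; auto.
Qed.

Lemma climit_scal : forall c s, climit (fun n => c * s n) = c * climit s.
Proof.
  intros c s. destruct (classic (c = 0)) as [Hc|Hc].
  - subst. rewrite Cmult_0_l. apply climit_lim.
    eapply hasLim_ext with (s := fun _ => 0).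
    + intros; ring.
    + unfold hasLim. apply filterlim_const.
  - destruct (classic (exists l, hasLim s l)) as [[l Hl]|E].
    + rewrite (climit_lim s l Hl). apply climit_lim. apply hasLim_scal; auto.
    + rewrite (climit_nolim s), (climit_nolim (fun n => c * s n)); [ring| |].
      * intros l Hl; apply E; exists (/ c * l).
        eapply hasLim_ext; [|apply (hasLim_scal (/c)); exact Hl].
        intros n. simpl. field. auto.
      * intros l0 Hl0; apply E; exists l0; auto.
Qed.

Lemma C1_neq_C0 : (1:C) <> 0.
Proof. intro H. injection H. apply R1_neq_R0. Qed.

Lemma Cmult_neq_0 : forall a b : C, a <> 0 -> b <> 0 -> a * b <> 0.
Proof.
  intros a b Ha Hb H. apply Hb. rewrite <- (Cmult_1_l b), <- (Cinv_l a Ha), <- Cmult_assoc, H. ring.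
Qed.

Lemma cprod_ext : forall n (f g : nat -> C), (forall j, (j < n)%nat -> f j = g j) -> cprod n f = cprod n g.
Proof.
  induction n; intros f g H; simpl; auto.
  rewrite (IHn f g); [rewrite H; auto|]. intros; apply H; lia.
Qed.

Lemma cprod_head : forall n (f : nat -> C), cprod (S n) f = f 0%nat * cprod n (fun j => f (S j)).
Proof.
  induction n; intros f.
  - simpl. ring.
  - change (cprod (S (S n)) f) with (cprod (S n) f * f (S n)).
    rewrite IHn. simpl. ring.
Qed.

Lemma cprod_mult : forall n (f g : nat -> C), cprod n (fun j => f j * g j) = cprod n f * cprod n g.
Proof. induction n; intros; simpl; [ring|]. rewrite IHn. ring. Qed.

Lemma cprod_const : forall n c, cprod n (fun _ => c) = c ^ n.
Proof. induction n; intros; simpl; [ring|]. rewrite IHn. ring. Qed.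

Lemma cprod_neq0 : forall n (f : nat -> C), (forall j, (j < n)%nat -> f j <> 0) -> cprod n f <> 0.
Proof.
  induction n; intros f H; simpl.
  - intro E. apply C1_neq_C0; auto.
  - apply Cmult_neq_0; [apply IHn; intros; apply H; lia | apply H; lia].
Qed.

Lemma cprod_div : forall n (f g : nat -> C), (forall j, (j < n)%nat -> g j <> 0) ->
  cprod n (fun j => f j / g j) = cprod n f / cprod n g.
Proof.
  induction n; intros f g H; simpl.
  - field; try apply C1_neq_C0.
  - rewrite IHn by (intros; apply H; lia).
    field. split; [apply H; lia|]. apply cprod_neq0; intros; apply H; lia.
Qed.

Lemma qpow_S : forall tau j, qpow tau (INR (S j)) = qpow tau 1 * qpow tau (INR j).
Proof.
  intros. rewrite !qpow_ee, <- ee_add. f_equal. rewrite S_INR, RtoC_plus. ring.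
Qed.

Lemma qpow_0 : forall tau, qpow tau (INR 0) = 1.
Proof.
  intros. unfold qpow. simpl. rewrite <- cexp_0. f_equal. ring.
Qed.

Lemma qpoch_shift : forall z tau, qpoch z tau = (1 - z) * qpoch (z * qpow tau 1) tau.
Proof.
  intros. unfold qpoch. rewrite <- climit_S, <- climit_scal.
  apply climit_ext. intros n. rewrite cprod_head. f_equal.
  - rewrite qpow_0. ring.
  - apply cprod_ext. intros j _. rewrite qpow_S. ring.
Qed.

Lemma PP_shift : forall tau w, PP tau w = (1 - ee w) * PP tau (w + tau).
Proof.
  intros. unfold PP. rewrite qpoch_shift. f_equal. f_equal.
  rewrite qpow_ee, <- ee_add. f_equal. ring.
Qed.

Lemma qpow_pow : forall tau j, qpow tau (INR j) = (qpow tau 1) ^ j.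
Proof.
  induction j. - apply qpow_0. - rewrite qpow_S, IHj. simpl. ring.
Qed.

Lemma qpoch_iter : forall J z tau,
  qpoch z tau = cprod J (fun j => 1 - z * (qpow tau 1)^j) * qpoch (z * (qpow tau 1)^J) tau.
Proof.
  induction J; intros.
  - simpl. rewrite Cmult_1_r. ring.
  - rewrite IHJ. simpl. rewrite (qpoch_shift (z * qpow tau 1 ^ J)).
    replace (z * qpow tau 1 ^ J * qpow tau 1) with (z * (qpow tau 1 * qpow tau 1 ^ J)) by ring. ring.
Qed.

Lemma Cmod_cexp : forall z, Cmod (cexp z) = exp (Re z).
Proof.
  intros [a b]. unfold cexp, Cmod; simpl.
  replace ((exp a * cos b) * ((exp a * cos b) * 1) + (exp a * sin b) * ((exp a * sin b) * 1))%R
    with (exp a * exp a)%R.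
  - apply sqrt_square. left; apply exp_pos.
  - pose proof (sin2_cos2 b). unfold Rsqr in H. nra.
Qed.

Lemma hasLim_bound : forall s l M, hasLim s l -> (forall n, (Cmod (s n) <= M)%R) -> (Cmod l <= M)%R.
Proof.
  intros s l M H HM. destruct (Rle_or_lt (Cmod l) M) as [|Hlt]; auto. exfalso.
  assert (Heps : (0 < Cmod l - M)%R) by lra.
  unfold hasLim in *. pose proof (proj1 (filterlim_locally_ball_norm (F:=eventually) (U:=C_NormedModule) s l) H) as H'.
  destruct (H' (mkposreal _ Heps)) as [N HN].
  specialize (HN N (le_n N)). unfold ball_norm in HN. simpl in HN.
  change (norm (minus (s N) l)) with (Cmod (s N - l)) in HN.
  pose proof (Cmod_triangle (s N) (l - s N)).
  replace (s N + (l - s N)) with l in H0 by ring.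
  replace (l - s N) with (- (s N - l)) in H0 by ring. rewrite Cmod_opp in H0.
  specialize (HM N). lra.
Qed.

Lemma hasLim_plus_c : forall s l c, hasLim s l -> hasLim (fun n => c + s n) (c + l).
Proof.
  intros s l c H.
  unfold hasLim in *. pose proof (proj1 (filterlim_locally_ball_norm (F:=eventually) (U:=C_NormedModule) s l) H) as H'.
  apply (proj2 (filterlim_locally_ball_norm (F:=eventually) (U:=C_NormedModule) (fun n => c + s n) (c + l))).
  intros eps. destruct (H' eps) as [N HN]. exists N. intros n Hn.
  specialize (HN n Hn). unfold ball_norm in *.
  change (norm (minus (c + s n) (c + l))) with (Cmod (c + s n - (c + l))).
  change (norm (minus (s n) l)) with (Cmod (s n - l)) in HN.
  replace (c + s n - (c + l)) with (s n - l) by ring. auto.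
Qed.

Lemma pow_le1 : forall r n, (0 <= r <= 1)%R -> (r ^ n <= 1)%R.
Proof. induction n; intros; simpl; [lra|]. pose proof (IHn H). pose proof (pow_le r n (proj1 H)). nra. Qed.

Fixpoint rs (a r : R) (n : nat) : R :=
  match n with O => 0%R | S m => (rs a r m + a * r ^ m)%R end.

Lemma rs_eq : forall a r n, (rs a r n * (1 - r) = a * (1 - r ^ n))%R.
Proof. induction n; simpl; [ring|]. rewrite Rmult_plus_distr_r, IHn. ring. Qed.

Lemma rs_nonneg : forall a r n, (0 <= a)%R -> (0 <= r)%R -> (0 <= rs a r n)%R.
Proof.
  induction n; intros; simpl; [lra|]. apply Rplus_le_le_0_compat; auto.
  apply Rmult_le_pos; auto. apply pow_le; auto.
Qed.

Lemma small_nonzero : forall (w q : C),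
  (Cmod q < 1)%R -> (Cmod w * 4 <= 1 - Cmod q)%R ->
  climit (fun n => cprod n (fun j => 1 - w * q ^ j)) <> 0.
Proof.
  intros w q Hq Hw.
  set (r := Cmod q) in *. set (a := Cmod w) in *.
  assert (Hr0 : (0 <= r)%R) by apply Cmod_ge_0.
  assert (Ha0 : (0 <= a)%R) by apply Cmod_ge_0.
  set (p := fun n => cprod n (fun j => 1 - w * q ^ j)).
  assert (HS : forall n, (0 <= rs a r n <= 1/4)%R).
  { intros n. pose proof (rs_eq a r n). pose proof (pow_le r n Hr0).
    assert (r ^ n <= 1)%R by (apply pow_le1; lra).
    split.
    - apply rs_nonneg; auto.
    - assert (0 < 1 - r)%R by lra.
      apply (Rmult_le_reg_r (1 - r)); auto. rewrite H. nra. }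
  assert (Hinv : forall n, (Cmod (p n - 1) <= 4/3 * rs a r n)%R).
  { induction n.
    - unfold p; simpl. replace (1 - 1) with (RtoC 0) by ring. rewrite Cmod_0. lra.
    - unfold p in *. simpl.
      set (P := cprod n (fun j => 1 - w * q ^ j)) in *.
      replace (P * (1 - w * q ^ n) - 1) with ((P - 1) + - (P * (w * q ^ n))) by ring.
      pose proof (Cmod_triangle (P - 1) (- (P * (w * q ^ n)))).
      rewrite Cmod_opp, !Cmod_mult, Cmod_pow in H.
      fold r a in H.
      assert (Cmod P <= 4/3)%R.
      { pose proof (Cmod_triangle (P - 1) 1). replace (P - 1 + 1) with P in H0 by ring.
        rewrite Cmod_1 in H0. specialize (HS n). lra. }
      pose proof (pow_le r n Hr0). specialize (HS n).
      assert (Cmod P * (a * r ^ n) <= 4/3 * (a * r^n))%R.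
      { apply Rmult_le_compat_r; auto. apply Rmult_le_pos; auto. }
      lra. }
  set (d := fun n => p (S n) - p n).
  assert (Hd : forall n, (Cmod (d n) <= 4/3 * a * r ^ n)%R).
  { intros n. unfold d, p. simpl.
    set (P := cprod n (fun j => 1 - w * q ^ j)) in *.
    replace (P * (1 - w * q ^ n) - P) with (- (P * (w * q ^ n))) by ring.
    rewrite Cmod_opp, !Cmod_mult, Cmod_pow. fold r a.
    assert (Cmod P <= 4/3)%R.
    { pose proof (Cmod_triangle (P - 1) 1). replace (P - 1 + 1) with P in H by ring.
      rewrite Cmod_1 in H. specialize (HS n). specialize (Hinv n). unfold p in Hinv. fold P in Hinv. lra. }
    pose proof (pow_le r n Hr0).
    assert (Cmod P * (a * r ^ n) <= 4/3 * (a * r^n))%R.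
    { apply Rmult_le_compat_r; auto. apply Rmult_le_pos; auto. }
    lra. }
  assert (Hex : ex_series (V:=C_CompleteNormedModule) d).
  { apply (ex_series_le (V:=C_CompleteNormedModule) d (fun n => 4/3 * a * r ^ n)%R).
    - intros n. apply Hd.
    - apply (ex_series_ext (K:=R_AbsRing) (V:=R_NormedModule) (fun n => scal (4/3 * a)%R (r ^ n)%R)).
      + intros n. reflexivity.
      + apply (ex_series_scal_l (K:=R_AbsRing) (V:=R_NormedModule) (4/3 * a)%R (fun n => (r ^ n)%R)). apply ex_series_geom. rewrite Rabs_pos_eq; auto. }
  assert (Hex' : exists l : C, @is_series _ C_CompleteNormedModule d l).
  { destruct Hex as [l Hl]. exists l. exact Hl. }
  destruct Hex' as [l Hl].
  assert (Hsum : forall n, sum_n d n = p (S n) - 1).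
  { induction n.
    - rewrite sum_O. unfold d. unfold p at 2. simpl. ring.
    - rewrite sum_Sn, IHn. change (plus (p (S n) - 1) (d (S n)) = p (S (S n)) - 1).
      change (plus (p (S n) - 1) (d (S n))) with ((p (S n) - 1) + d (S n)).
      unfold d. change (@eq C (p (S n) - 1 + (p (S (S n)) - p (S n))) (p (S (S n)) - 1)). ring. }
  assert (Hl' : hasLim (fun n => p (S n) - 1) l).
  { eapply hasLim_ext; [apply Hsum|]. exact Hl. }
  assert (Hpl : hasLim p (1 + l)).
  { apply (proj2 (hasLim_S p (1 + l))).
    eapply hasLim_ext; [|apply (hasLim_plus_c _ _ 1 Hl')]. intros n; simpl; ring. }
  rewrite (climit_lim _ _ Hpl).
  assert (Cmod l <= 1/3)%R.
  { apply (hasLim_bound _ _ _ Hl'). intros n. specialize (Hinv (S n)). specialize (HS (S n)). lra. }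
  intro E. assert (l = - (1)). { transitivity ((1 + l) - 1); [ring|]. rewrite E; ring. }
  rewrite H0, Cmod_opp, Cmod_1 in H. lra.
Qed.

Lemma Cmod_q_lt1 : forall tau, (0 < Im tau)%R -> (Cmod (qpow tau 1) < 1)%R.
Proof.
  intros [a b] H. simpl in H. unfold qpow. rewrite Cmod_cexp.
  assert (Hre : (Re (2 * PI * Ci * 1 * (a, b)) < 0)%R).
  { simpl. pose proof PI_RGT_0. nra. }
  pose proof (exp_increasing _ _ Hre). rewrite exp_0 in H0. exact H0.
Qed.

Lemma qpoch_neq0 : forall z tau, (0 < Im tau)%R ->
  (forall k : nat, 1 - z * (qpow tau 1) ^ k <> 0) -> qpoch z tau <> 0.
Proof.
  intros z tau Ht Hk.
  pose proof (Cmod_q_lt1 tau Ht) as Hr.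
  set (q := qpow tau 1) in *. set (r := Cmod q) in *.
  assert (Hr0 : (0 <= r)%R) by apply Cmod_ge_0.
  set (m := Cmod z). assert (Hm : (0 <= m)%R) by apply Cmod_ge_0.
  assert (Hy : (0 < (1 - r) / (4 * (m + 1)))%R).
  { apply Rdiv_lt_0_compat; lra. }
  destruct (pow_lt_1_zero r ltac:(rewrite Rabs_pos_eq; lra) _ Hy) as [J HJ].
  specialize (HJ J (le_n J)). rewrite Rabs_pos_eq in HJ by (apply pow_le; auto).
  rewrite (qpoch_iter J). apply Cmult_neq_0.
  - apply cprod_neq0. intros; apply Hk.
  - unfold qpoch.
    rewrite (climit_ext _ (fun n => cprod n (fun j => 1 - z * q ^ J * q ^ j))).
    + apply small_nonzero; auto.
      rewrite Cmod_mult, Cmod_pow. fold r m.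
      pose proof (pow_le r J Hr0).
      assert (r ^ J * (4 * (m + 1)) < 1 - r)%R.
      { apply (Rmult_lt_compat_r (4 * (m+1))) in HJ; [|lra].
        unfold Rdiv in HJ. rewrite Rmult_assoc, Rinv_l in HJ by lra. lra. }
      nra.
    + intros n. apply cprod_ext. intros j _. rewrite qpow_pow. reflexivity.
Qed.

Lemma PP_shift' : forall tau w w', w' = w + tau -> PP tau w = (1 - ee w) * PP tau w'.
Proof. intros; subst; apply PP_shift. Qed.

Lemma ee_opp_mul : forall w, ee (- w) * ee w = 1.
Proof. intros. unfold ee. rewrite <- cexp_add, <- cexp_0. f_equal. ring. Qed.

Lemma Cmult_reg_l' : forall c x y : C, c <> 0 -> c * x = c * y -> x = y.
Proof.
  intros c x y Hc H. transitivity (/ c * (c * x)); [field; auto|].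
  rewrite H. field; auto.
Qed.


Definition LmC (tau s a M : C) : C :=
  ee (- (s + a * tau) + (a + 1) * tau * M) * PP tau (- s + (1 + M) * tau)
  * PP tau (s - M * tau) * PP tau (s + a * tau) * PP tau (- s + (1 - a) * tau).

Definition RmC (tau s a M : C) : C :=
  - (PP tau s * PP tau (- s + tau) * PP tau (s + (a + 1 - M) * tau) * PP tau (- s + (M - a) * tau)).

Lemma L_step : forall tau s a M, LmC tau s a (M + 1) = - ee (s + (a - M) * tau) * LmC tau s a M.
Proof.
  intros tau s a M. unfold LmC.
  rewrite (PP_shift' tau (- s + (1 + M) * tau) (- s + (1 + (M + 1)) * tau)) by ring.
  rewrite (PP_shift' tau (s - (M + 1) * tau) (s - M * tau)) by ring.
  rewrite (ee_flip (s - (M + 1) * tau)).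
  replace (- (s - (M + 1) * tau)) with (- s + (1 + M) * tau) by ring.
  replace (ee (- (s + a * tau) + (a + 1) * tau * (M + 1)))
    with (ee (- (s + a * tau) + (a + 1) * tau * M) * ee ((a + 1) * tau))
    by (rewrite <- ee_add; f_equal; ring).
  replace (ee (s + (a - M) * tau)) with (ee ((a + 1) * tau) * ee (s - (M + 1) * tau))
    by (rewrite <- ee_add; f_equal; ring).
  ring.
Qed.

Lemma R_step : forall tau s a M, RmC tau s a (M + 1) = - ee (s + (a - M) * tau) * RmC tau s a M.
Proof.
  intros tau s a M. unfold RmC.
  rewrite (PP_shift' tau (s + (a + 1 - (M + 1)) * tau) (s + (a + 1 - M) * tau)) by ring.
  rewrite (PP_shift' tau (- s + (M - a) * tau) (- s + (M + 1 - a) * tau)) by ring.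
  replace (s + (a + 1 - (M + 1)) * tau) with (s + (a - M) * tau) by ring.
  rewrite (ee_flip (s + (a - M) * tau)).
  replace (- (s + (a - M) * tau)) with (- s + (M - a) * tau) by ring.
  ring.
Qed.

Lemma LR_0 : forall tau s a, LmC tau s a 0 = RmC tau s a 0.
Proof.
  intros tau s a.
  unfold LmC, RmC.
  rewrite (PP_shift' tau (s + a * tau) (s + (a + 1 - 0) * tau)) by ring.
  rewrite (PP_shift' tau (- s + (0 - a) * tau) (- s + (1 - a) * tau)) by ring.
  replace (- s + (1 + 0) * tau) with (- s + tau) by ring.
  replace (s - 0 * tau) with s by ring.
  rewrite (ee_flip (s + a * tau)).
  replace (- (s + a * tau) + (a + 1) * tau * 0) with (- (s + a * tau)) by ring.
  replace (- s + (0 - a) * tau) with (- (s + a * tau)) by ring.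
  pose proof (ee_opp_mul (s + a * tau)).
  transitivity (- (ee (- (s + a * tau)) * ee (s + a * tau)) *
    (1 - ee (- (s + a * tau))) * PP tau (s + (a + 1 - 0) * tau) * PP tau (- s + tau) * PP tau s *
    PP tau (- s + (1 - a) * tau)); [ring|].
  rewrite H. ring.
Qed.

Lemma LR_all : forall tau s a (m : Z), LmC tau s a (IZR m) = RmC tau s a (IZR m).
Proof.
  intros tau s a. apply Z.peano_ind.
  - apply LR_0.
  - intros m IH. rewrite succ_IZR, RtoC_plus, L_step, R_step, IH. reflexivity.
  - intros m IH. rewrite <- (Z.succ_pred m) in IH.
    rewrite succ_IZR, RtoC_plus, L_step, R_step in IH.
    assert (Hn : - ee (s + (a - IZR (Z.pred m)) * tau) <> 0).
    { intro E. apply (ee_neq0 (s + (a - IZR (Z.pred m)) * tau)).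
      transitivity (- (- ee (s + (a - IZR (Z.pred m)) * tau))); [ring|]. rewrite E; ring. }
    apply (Cmult_reg_l' _ _ _ Hn) in IH. exact IH.
Qed.


Lemma ee_ne1 : forall v, (forall n : Z, v <> RtoC (IZR n)) -> 1 - ee v <> 0.
Proof.
  intros v H E. destruct (ee_one v) as [k Hk].
  - transitivity (1 - (1 - ee v)); [ring|]. rewrite E; ring.
  - apply (H k Hk).
Qed.

Lemma lat_pos : forall s tau, ~ in_lattice s tau ->
  forall k n : Z, s + RtoC (IZR k) * tau <> RtoC (IZR n).
Proof.
  intros s tau H k n E. apply H. exists n, (- k)%Z.
  rewrite opp_IZR, RtoC_opp, <- E. ring.
Qed.

Lemma lat_neg : forall s tau, ~ in_lattice s tau ->
  forall k n : Z, - s + RtoC (IZR k) * tau <> RtoC (IZR n).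
Proof.
  intros s tau H k n E. apply H. exists (- n)%Z, k.
  rewrite opp_IZR, RtoC_opp, <- E. ring.
Qed.

Lemma ee_mul_qpow : forall tau w j, ee w * qpow tau 1 ^ j = ee (w + RtoC (INR j) * tau).
Proof. intros. rewrite <- qpow_pow, qpow_ee, <- ee_add. reflexivity. Qed.

Lemma PP_nz_gen : forall tau w, (0 < Im tau)%R ->
  (forall (j : nat) (n : Z), w + RtoC (INR j) * tau <> RtoC (IZR n)) -> PP tau w <> 0.
Proof.
  intros tau w Ht H. unfold PP. apply qpoch_neq0; auto. intros j.
  rewrite ee_mul_qpow. apply ee_ne1. intros n. apply H.
Qed.

Lemma PP_nz_pos : forall tau s, (0 < Im tau)%R -> ~ in_lattice s tau ->
  forall k : Z, PP tau (s + RtoC (IZR k) * tau) <> 0.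
Proof.
  intros tau s Ht Hs k. apply PP_nz_gen; auto. intros j n E.
  apply (lat_pos s tau Hs (k + Z.of_nat j) n). rewrite <- E, plus_IZR, RtoC_plus, <- INR_IZR_INZ. ring.
Qed.

Lemma PP_nz_neg : forall tau s, (0 < Im tau)%R -> ~ in_lattice s tau ->
  forall k : Z, PP tau (- s + RtoC (IZR k) * tau) <> 0.
Proof.
  intros tau s Ht Hs k. apply PP_nz_gen; auto. intros j n E.
  apply (lat_neg s tau Hs (k + Z.of_nat j) n). rewrite <- E, plus_IZR, RtoC_plus, <- INR_IZR_INZ. ring.
Qed.

Lemma Qq_nz : forall tau, (0 < Im tau)%R -> qpoch (qpow tau 1) tau <> 0.
Proof.
  intros tau Ht. apply qpoch_neq0; auto. intros j.
  replace (qpow tau 1 * qpow tau 1 ^ j) with (qpow tau 1 ^ (S j)) by (simpl; ring).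
  rewrite <- qpow_pow, qpow_ee.
  apply ee_ne1. intros n E. apply (f_equal Im) in E.
  rewrite im_scal_l in E. change (Im (RtoC (IZR n))) with 0%R in E.
  pose proof (lt_0_INR (S j) ltac:(lia)). nra.
Qed.

Definition c8 (tau : C) : C := - Ci * qpow tau (/ 8) * qpoch (qpow tau 1) tau.

Lemma theta_P : forall v tau,
  vartheta v tau = c8 tau * cexp (- PI * Ci * v) * PP tau v * PP tau (tau - v).
Proof.
  intros. unfold vartheta, c8, PP.
  replace (qpow tau 1 * cexp (- (2 * PI * Ci * v))) with (ee (tau - v)).
  - unfold ee. ring.
  - rewrite qpow_ee. unfold ee. rewrite <- cexp_add. f_equal. ring.
Qed.

Lemma theta_odd : forall v tau, vartheta (- v) tau = - vartheta v tau.
Proof.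
  intros. rewrite !theta_P.
  rewrite (PP_shift' tau (- v) (tau - v)) by ring.
  rewrite (PP_shift' tau v (tau - - v)) by ring.
  set (X := cexp (- PI * Ci * v)). set (Y := cexp (- PI * Ci * - v)).
  assert (HXY : X * Y = 1).
  { unfold X, Y. rewrite <- cexp_add, <- cexp_0. f_equal. ring. }
  assert (Hv : ee v = Y * Y). { unfold ee, Y. rewrite <- cexp_add. f_equal. ring. }
  assert (Hmv : ee (- v) = X * X). { unfold ee, X. rewrite <- cexp_add. f_equal. ring. }
  rewrite Hv, Hmv.
  transitivity (c8 tau * PP tau (tau - v) * PP tau (tau - - v) * (Y * (1 - X * X))); [ring|].
  transitivity (c8 tau * PP tau (tau - v) * PP tau (tau - - v) * (- X * (1 - Y * Y))); [|ring].
  f_equal. transitivity (Y - X * (X * Y)); [ring|]. rewrite HXY.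
  transitivity (- X + Y * (X * Y)); [|ring]. rewrite HXY. ring.
Qed.

Lemma Ci_neq0 : Ci <> 0.
Proof. intro H. injection H. apply R1_neq_R0. Qed.

Lemma c8_nz : forall tau, (0 < Im tau)%R -> c8 tau <> 0.
Proof.
  intros. unfold c8. apply Cmult_neq_0; [apply Cmult_neq_0|].
  - intro E. apply Ci_neq0. transitivity (- - Ci); [ring|]. rewrite E; ring.
  - unfold qpow. apply cexp_neq0.
  - apply Qq_nz; auto.
Qed.

Lemma theta_nz : forall v tau, (0 < Im tau)%R -> ~ in_lattice v tau -> vartheta v tau <> 0.
Proof.
  intros v tau Ht Hv. rewrite theta_P.
  apply Cmult_neq_0; [apply Cmult_neq_0; [apply Cmult_neq_0|]|].
  - apply c8_nz; auto.
  - apply cexp_neq0.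
  - replace (PP tau v) with (PP tau (v + RtoC (IZR 0) * tau)) by (f_equal; simpl; ring). apply PP_nz_pos; auto.
  - replace (tau - v) with (- v + RtoC (IZR 1) * tau) by (simpl; ring). apply PP_nz_neg; auto.
Qed.

Lemma zsum_ext : forall n a (g h : Z -> C), (forall k, g k = h k) -> zsum a n g = zsum a n h.
Proof. induction n; intros; simpl; auto. rewrite (IHn a g h H), H. auto. Qed.

Lemma zsum_scal : forall n a c (g : Z -> C), zsum a n (fun k => c * g k) = c * zsum a n g.
Proof. induction n; intros; simpl; [ring|]. rewrite IHn. ring. Qed.

Lemma zsum_left : forall n a (g : Z -> C), zsum a (S n) g = g a + zsum (a + 1)%Z n g.
Proof.
  induction n; intros.
  - simpl. replace (a + 0)%Z with a by lia. ring.
  - change (zsum a (S (S n)) g) with (zsum a (S n) g + g (a + Z.of_nat (S n))%Z).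
    rewrite IHn. simpl.
    replace (a + Z.pos (Pos.of_succ_nat n))%Z with (a + 1 + Z.of_nat n)%Z by lia. ring.
Qed.

Lemma zsum_refl : forall n a b (g : Z -> C),
  zsum a n (fun k => g (b - k)%Z) = zsum (b - a - Z.of_nat n + 1)%Z n g.
Proof.
  induction n; intros; [reflexivity|].
  change (zsum a (S n) (fun k => g (b - k)%Z)) with
    (zsum a n (fun k => g (b - k)%Z) + g (b - (a + Z.of_nat n))%Z).
  rewrite IHn, zsum_left.
  replace (b - a - Z.of_nat (S n) + 1)%Z with (b - (a + Z.of_nat n))%Z by lia.
  replace (b - (a + Z.of_nat n) + 1)%Z with (b - a - Z.of_nat n + 1)%Z by lia. ring.
Qed.

Lemma boxsum_neg : forall N K (f g : list Z -> C) c,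
  (forall l, length l = N -> f l = c * g (map Z.opp l)) ->
  boxsum N K f = c * boxsum N K g.
Proof.
  induction N; intros K f g c H.
  - simpl. apply H. reflexivity.
  - simpl.
    rewrite (zsum_ext _ _ _ (fun k => c * (fun k' => boxsum N K (fun l => g (k' :: l))) (0 - k)%Z)).
    + rewrite zsum_scal, (zsum_refl _ _ _ (fun k' => boxsum N K (fun l => g (k' :: l)))). f_equal. f_equal. lia.
    + intros k. simpl. apply IHN. intros l Hl. rewrite H by (simpl; auto). reflexivity.
Qed.

Lemma sumZN_neg : forall N (f g : list Z -> C) c,
  (forall l, length l = N -> f l = c * g (map Z.opp l)) ->
  sumZN N f = c * sumZN N g.
Proof.
  intros. unfold sumZN. rewrite <- climit_scal. apply climit_ext. intros K.
  apply boxsum_neg; auto.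
Qed.

Lemma csum_sub : forall n c (f : nat -> C), csum n (fun j => c - f j) = RtoC (INR n) * c - csum n f.
Proof.
  induction n; intros; [simpl; ring|]. cbn [csum]. rewrite IHn. rewrite S_INR, RtoC_plus. ring.
Qed.

Lemma zabs_sum_opp : forall l, zabs_sum (map Z.opp l) = (- zabs_sum l)%Z.
Proof. induction l; simpl; auto. rewrite IHl. lia. Qed.

Lemma nth_opp : forall j l, nth j (map Z.opp l) 0%Z = (- nth j l 0)%Z.
Proof. intros. change 0%Z with (Z.opp 0) at 1. apply map_nth. Qed.

Lemma prod_exp : forall n N c, length n = N ->
  cprod N (fun j => cexp (c * RtoC (IZR (nth j n 0%Z)))) = cexp (c * RtoC (IZR (zabs_sum n))).
Proof.
  induction n; intros N c H; destruct N; simpl in H; try discriminate.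
  - simpl. rewrite <- cexp_0. f_equal. ring.
  - injection H as H. rewrite cprod_head. cbn [nth zabs_sum fold_right].
    rewrite (IHn N c H).
    rewrite <- cexp_add. f_equal. rewrite plus_IZR, RtoC_plus. unfold zabs_sum. ring.
Qed.

Definition U0 (u : nat -> C) (beta tau M : C) : C :=
  cexp (PI * Ci * u 0%nat)
  * qpoch (cexp (2 * PI * Ci * u 0%nat) * qpow tau (beta + M)) tau
  / qpoch (cexp (2 * PI * Ci * u 0%nat) * qpow tau M) tau.

Definition fac (u : nat -> C) (tau : C) (k : Z) (j : nat) : C :=
  sgnZ k
  * cexp (- (2 * PI * Ci * RtoC (IZR k) * u (S j)))
  * cexp (PI * Ci * tau * RtoC (IZR (k * (k + 1))))
  / vartheta (u (S j)) tau.

Definition termfun (u : nat -> C) (beta tau : C) (N : nat) (n : list Z) : C :=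
  U0 u beta tau (RtoC (IZR (zabs_sum n))) * cprod N (fun j => fac u tau (nth j n 0%Z) j).

Lemma mu_hat_eq : forall N u beta tau,
  mu_hat N u beta tau = cexp (PI * Ci * (beta - 1) * csum (S N) u) * sumZN N (termfun u beta tau N).
Proof. reflexivity. Qed.

Lemma fac_rel : forall tau a (u : nat -> C) k j, (0 < Im tau)%R ->
  ~ in_lattice (u (S j)) tau -> ~ in_lattice (u (S j) + a * tau) tau ->
  fac (fun j => - a * tau - u j) tau k j =
  cexp (2 * PI * Ci * (a + 1) * tau * RtoC (IZR k))
  * (- vartheta (u (S j)) tau / vartheta (u (S j) + a * tau) tau)
  * fac u tau (- k) j.
Proof.
  intros tau a u k j Ht H1 H2. unfold fac. cbv beta.
  assert (Hs : sgnZ (- k) = sgnZ k) by (unfold sgnZ; rewrite Z.even_opp; auto).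
  rewrite Hs.
  replace (- a * tau - u (S j)) with (- (u (S j) + a * tau)) by ring.
  rewrite theta_odd.
  pose proof (theta_nz _ _ Ht H1). pose proof (theta_nz _ _ Ht H2).
  set (T := vartheta (u (S j)) tau) in *. set (T' := vartheta (u (S j) + a * tau) tau) in *.
  assert (Hc : cexp (- (2 * PI * Ci * RtoC (IZR k) * - (u (S j) + a * tau)))
             * cexp (PI * Ci * tau * RtoC (IZR (k * (k + 1))))
             = cexp (2 * PI * Ci * (a + 1) * tau * RtoC (IZR k))
               * (cexp (- (2 * PI * Ci * RtoC (IZR (- k)) * u (S j)))
                  * cexp (PI * Ci * tau * RtoC (IZR (- k * (- k + 1)))))).
  { rewrite <- !cexp_add. f_equal.
    rewrite ?mult_IZR, ?plus_IZR, ?opp_IZR, ?RtoC_mult, ?RtoC_plus, ?RtoC_opp. ring. }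
  transitivity (sgnZ k * (cexp (- (2 * PI * Ci * RtoC (IZR k) * - (u (S j) + a * tau)))
             * cexp (PI * Ci * tau * RtoC (IZR (k * (k + 1))))) / - T'); [unfold Cdiv; ring|].
  rewrite Hc. field. split; auto.
Qed.

Lemma alg_U0 : forall A X' E P1 P2 P4 Psa Pa1 c X Y Ps Pts P3 : C,
  P4 <> 0 -> P2 <> 0 -> c <> 0 -> X' <> 0 -> Psa <> 0 -> Pa1 <> 0 ->
  A * X' * E * P1 * P2 * Psa * Pa1 = - (Ps * Pts * P3 * P4) -> X * Y = 1 ->
  A * P1 / P4 * E = - (c * X * Ps * Pts) / (c * X' * Psa * Pa1) * (Y * P3 / P2).
Proof.
  intros A X' E P1 P2 P4 Psa Pa1 c X Y Ps Pts P3 H4 H2 Hc HX Hsa Ha1 HL HXY.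
  assert (HX0 : X <> 0). { intro E0. rewrite E0, Cmult_0_l in HXY. apply C1_neq_C0; auto. }
  assert (HY : Y = / X). { transitivity (/ X * (X * Y)); [field; auto|]. rewrite HXY. ring. }
  subst Y.
  transitivity (A * X' * E * P1 * P2 * Psa * Pa1 / (X' * P2 * Psa * Pa1 * P4)).
  { field. repeat split; auto. }
  rewrite HL. field. repeat split; auto.
Qed.

Lemma U0_rel : forall tau a (u : nat -> C) (m : Z), (0 < Im tau)%R ->
  ~ in_lattice (u 0%nat) tau -> ~ in_lattice (u 0%nat + a * tau) tau ->
  U0 (fun j => - a * tau - u j) (a + 1) tau (RtoC (IZR m))
  * cexp (2 * PI * Ci * (a + 1) * tau * RtoC (IZR m))
  = (- vartheta (u 0%nat) tau / vartheta (u 0%nat + a * tau) tau)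
    * U0 u (a + 1) tau (RtoC (IZR (- m))).
Proof.
  intros tau a u m Ht H1 H2. unfold U0. cbv beta.
  set (s := u 0%nat) in *. rewrite opp_IZR, RtoC_opp.
  set (M := RtoC (IZR m)).
  replace (cexp (2 * PI * Ci * (- a * tau - s)) * qpow tau (a + 1 + M))
    with (ee (- s + (1 + M) * tau)) by (rewrite qpow_ee; unfold ee; rewrite <- cexp_add; f_equal; ring).
  replace (cexp (2 * PI * Ci * (- a * tau - s)) * qpow tau M)
    with (ee (- s + (M - a) * tau)) by (rewrite qpow_ee; unfold ee; rewrite <- cexp_add; f_equal; ring).
  replace (cexp (2 * PI * Ci * s) * qpow tau (a + 1 + - M))
    with (ee (s + (a + 1 - M) * tau)) by (rewrite qpow_ee; unfold ee; rewrite <- cexp_add; f_equal; ring).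
  replace (cexp (2 * PI * Ci * s) * qpow tau (- M))
    with (ee (s - M * tau)) by (rewrite qpow_ee; unfold ee; rewrite <- cexp_add; f_equal; ring).
  change (qpoch (ee ?w) tau) with (PP tau w).
  rewrite !theta_P.
  replace (PP tau (tau - s)) with (PP tau (- s + tau)) by (f_equal; ring).
  replace (PP tau (tau - (s + a * tau))) with (PP tau (- s + (1 - a) * tau)) by (f_equal; ring).
  pose proof (LR_all tau s a m) as HLR. unfold LmC, RmC in HLR. fold M in HLR.
  assert (HE1 : ee (- (s + a * tau) + (a + 1) * tau * M) =
    cexp (PI * Ci * (- a * tau - s)) * cexp (- PI * Ci * (s + a * tau))
    * cexp (2 * PI * Ci * (a + 1) * tau * M)).
  { unfold ee. rewrite <- !cexp_add. f_equal. ring. }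
  assert (HE2 : cexp (- PI * Ci * s) * cexp (PI * Ci * s) = 1).
  { rewrite <- cexp_add, <- cexp_0. f_equal. ring. }
  rewrite HE1 in HLR.
  assert (N1 : PP tau (- s + (M - a) * tau) <> 0).
  { replace (- s + (M - a) * tau) with (- (s + a * tau) + RtoC (IZR m) * tau) by (unfold M; ring).
    apply PP_nz_neg; auto. }
  assert (N2 : PP tau (s - M * tau) <> 0).
  { replace (s - M * tau) with (s + RtoC (IZR (- m)) * tau)
      by (unfold M; rewrite opp_IZR, RtoC_opp; ring).
    apply PP_nz_pos; auto. }
  assert (N3 : PP tau (s + a * tau) <> 0).
  { replace (PP tau (s + a * tau)) with (PP tau ((s + a * tau) + RtoC (IZR 0) * tau)) by (f_equal; ring).
    apply PP_nz_pos; auto. }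
  assert (N4 : PP tau (- s + (1 - a) * tau) <> 0).
  { replace (- s + (1 - a) * tau) with (- (s + a * tau) + RtoC (IZR 1) * tau) by ring.
    apply PP_nz_neg; auto. }
  assert (N5 : c8 tau <> 0) by (apply c8_nz; auto).
  assert (N6 : cexp (- PI * Ci * (s + a * tau)) <> 0) by apply cexp_neq0.
  apply (alg_U0 _ (cexp (- PI * Ci * (s + a * tau))) _ _ (PP tau (s - M * tau))); auto.
Qed.

Lemma term_rel : forall tau a (u : nat -> C) N n, (0 < Im tau)%R ->
  (forall j : nat, (j <= N)%nat -> ~ in_lattice (u j) tau /\ ~ in_lattice (u j + a * tau) tau) ->
  length n = N ->
  termfun (fun j => - a * tau - u j) (a + 1) tau N n =
  cprod (S N) (fun j => - vartheta (u j) tau / vartheta (u j + a * tau) tau)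
  * termfun u (a + 1) tau N (map Z.opp n).
Proof.
  intros tau a u N n Ht Hu Hl. unfold termfun. rewrite zabs_sum_opp.
  rewrite (cprod_ext N (fun j => fac (fun j => - a * tau - u j) tau (nth j n 0%Z) j)
    (fun j => cexp (2 * PI * Ci * (a + 1) * tau * RtoC (IZR (nth j n 0%Z)))
      * (- vartheta (u (S j)) tau / vartheta (u (S j) + a * tau) tau)
      * fac u tau (nth j (map Z.opp n) 0%Z) j)).
  2:{ intros j Hj. rewrite nth_opp. destruct (Hu (S j) ltac:(lia)).
      apply fac_rel; auto. }
  rewrite !cprod_mult, prod_exp by auto.
  rewrite cprod_head.
  destruct (Hu 0%nat ltac:(lia)) as [H1 H2].
  transitivity ((U0 (fun j => - a * tau - u j) (a + 1) tau (RtoC (IZR (zabs_sum n)))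
     * cexp (2 * PI * Ci * (a + 1) * tau * RtoC (IZR (zabs_sum n))))
     * cprod N (fun j => - vartheta (u (S j)) tau / vartheta (u (S j) + a * tau) tau)
     * cprod N (fun j => fac u tau (nth j (map Z.opp n) 0%Z) j)); [ring|].
  rewrite U0_rel by auto. ring.
Qed.

Theorem theorem1p1 (tau : C) (Htau : (0 < Im tau)%R) (N : nat) (HN : (1 <= N)%nat)
  (alpha : C) (u : nat -> C)
  (Hu : forall j : nat, (j <= N)%nat ->
        ~ in_lattice (u j) tau /\ ~ in_lattice (u j + alpha * tau) tau) :
  let U := csum (S N) u in
  cexp (2 * PI * Ci * alpha * U)
  * cexp (PI * Ci * alpha ^ 2 * RtoC (INR (S N)) * tau)
  * mu_hat N (fun j => - alpha * tau - u j) (alpha + 1) tau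
  = (-1) ^ (S N)
    * cprod (S N) (fun j => vartheta (u j) tau)
    / cprod (S N) (fun j => vartheta (u j + alpha * tau) tau)
    * mu_hat N u (alpha + 1) tau.
Proof.
  intros U. rewrite !mu_hat_eq.
  rewrite (sumZN_neg N _ (termfun u (alpha + 1) tau N)
     (cprod (S N) (fun j => - vartheta (u j) tau / vartheta (u j + alpha * tau) tau))).
  2:{ intros l Hl. apply term_rel; auto. }
  rewrite (csum_sub (S N) (- alpha * tau) u). fold U.
  assert (HK : cprod (S N) (fun j => - vartheta (u j) tau / vartheta (u j + alpha * tau) tau)
    = (-1) ^ (S N) * cprod (S N) (fun j => vartheta (u j) tau)
      / cprod (S N) (fun j => vartheta (u j + alpha * tau) tau)).
  { rewrite (cprod_ext (S N) _ (fun j => (-1 * vartheta (u j) tau) / vartheta (u j + alpha * tau) tau))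
      by (intros; unfold Cdiv; ring).
    rewrite cprod_div.
    - rewrite cprod_mult, cprod_const. reflexivity.
    - intros j Hj. destruct (Hu j ltac:(lia)). apply theta_nz; auto. }
  rewrite HK.
  set (K := (-1) ^ (S N) * cprod (S N) (fun j => vartheta (u j) tau)
      / cprod (S N) (fun j => vartheta (u j + alpha * tau) tau)).
  set (S0 := sumZN N (termfun u (alpha + 1) tau N)).
  transitivity (cexp (2 * PI * Ci * alpha * U + PI * Ci * alpha ^ 2 * RtoC (INR (S N)) * tau
     + PI * Ci * (alpha + 1 - 1) * (RtoC (INR (S N)) * (- alpha * tau) - U)) * (K * S0)).
  { rewrite !cexp_add. ring. }
  transitivity (K * (cexp (PI * Ci * (alpha + 1 - 1) * U) * S0)); [|reflexivity].
  rewrite (cexp_ext _ (PI * Ci * (alpha + 1 - 1) * U)) by ring. ring.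
Qed.
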